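(* Consider the following networked control setting. Let $f_p:\mathbb{R}^{n_p}\times\mathbb{R}^{m_p}\to\mathbb{R}^{n_p}$ with $f_p(0,0)=0$, closed sets $\mathbb{X}_p\subseteq\mathbb{R}^{n_p}$, $\mathbb{U}_p\subseteq\mathbb{R}^{m_p}$ containing the origin, matrices $Q,R>0$, and integers $g\in\mathbb{I}_{\geq 1}$, $c\in\mathbb{I}_{\geq g}$, $b\in\mathbb{I}_{\geq c}$, $q:=\lceil c/g\rceil$. The overall state is $x=(x_p,u_s,\beta)\in\mathbb{X}:=\mathbb{X}_p\times\mathbb{U}_p\times\mathbb{I}_{[0,b]}$, the input $u=(u_c,\gamma)\in\mathbb{U}:=\mathbb{U}_p\times\{0,1\}$, and the dynamics are $x(k+1)=f(x(k),u(k))$ with $$f(x,u)=\big(f_p(x_p,\gamma u_c+(1-\gamma)u_s),\ \gamma u_c+(1-\gamma)u_s,\ \min\{\beta+g-\gamma c,b\}\big),$$ stage cost $\ell(x,u)=\|x_p\|_Q^2+\gamma\|u_c\|_R^2+(1-\gamma)\|u_s\|_R^2$. For $u_c\in\mathbb{U}_p$ define $f_{p,0}(x_p,u_c):=x_p$, $f_{p,i}(x_p,u_c):=f_p(f_{p,i-1}(x_p,u_c),u_c)$. Assume: (A1) there exist a closed set $\mathbb{X}_{f,p}\subseteq\mathbb{X}_p$ containing the origin and $k_p:\mathbb{X}_{f,p}\to\mathbb{U}_p$ such that for all $x_p\in\mathbb{X}_{f,p}$: $f_{p,i}(x_p,k_p(x_p))\in\mathbb{X}_p$ for all $i\in\mathbb{I}_{[1,q-1]}$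 and $f_{p,q}(x_p,k_p(x_p))\in\mathbb{X}_{f,p}$; (A2) there is a continuous positive definite $V_{f,p}:\mathbb{X}_{f,p}\to\mathbb{R}$ with, for all $x_p\in\mathbb{X}_{f,p}$, $V_{f,p}(f_{p,q}(x_p,k_p(x_p)))-V_{f,p}(x_p)\leq -q\|k_p(x_p)\|_R^2-\sum_{i=0}^{q-1}\|f_{p,i}(x_p,k_p(x_p))\|_Q^2$; (A3) $c/g\notin\mathbb{I}$. Let $\sigma>0$, $V_f(x):=V_{f,p}(x_p)+\sigma(b^2-\beta^2)$, and $\mathbb{X}_f:=\big(\{0\}\times\{0\}\times\mathbb{I}_{[0,c-g-1]}\big)\cup\big(\mathbb{X}_{f,p}\times\mathbb{U}_p\times\mathbb{I}_{[c-g,b]}\big)$. Fix $r\in\mathbb{I}_{\geq1}$, $M:=rq$, and $N\in\mathbb{I}_{\geq M}$. The closed loop is generated by the rollout scheme: at each $k=jM$, $j\in\mathbb{I}_{\geq0}$, solve the problem $\mathbb{P}(x(jM))$: minimize $\sum_{i=0}^{N-1}\ell(x(i|jM),u(i|jM))+V_f(x(N|jM))$ over $u(0|jM),\dots,u(N-1|jM)$ subject to $x(i+1|jM)=f(x(i|jM),u(i|jM))$, $x(i|jM)\in\mathbb{X}$, $u(i|jM)\in\mathbb{U}$ for $i\in\mathbb{I}_{[0,N-1]}$, $x(0|jM)=x(jM)$, $x(N|jM)\in\mathbb{X}_f$, with optimizer $u^*(\cdot|jM)$, and apply $u(jM+i)=u^*(i|jM)$ for $i\in\mathbb{I}_{[0,M-1]}$.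 Then, if $\mathbb{P}(x(0))$ is feasible, $\mathbb{P}(x(jM))$ is feasible for all $j\in\mathbb{I}_{\geq0}$, and $x_p(k)\to0$ and $u_s(k)\to0$ as $k\to\infty$. Additionally, $\beta(k)$ converges to the set $[\max\{0,b-Ng\},b]$ as $k\to\infty$, and the subsequence $\beta(jM)$ converges to $[\max\{0,b-(N-M)g\},b]$ as $j\to\infty$.
   Context: $\mathbb{I}$ denotes the integers, $\mathbb{I}_{[a,b]}:=\mathbb{I}\cap[a,b]$, $\mathbb{I}_{\geq a}:=\mathbb{I}\cap[a,\infty)$, $\|v\|_A^2:=v^TAv$, and $A>0$ means positive definite. Here $x_p$ is the plant state, $u_s(k)=u_p(k-1)$ is the last applied input held by a zero-order-hold actuator, $\beta$ is the token level of a token bucket (size $b$, token rate $g$, transmission cost $c$), $u_c$ the computed control value and $\gamma\in\{0,1\}$ the transmission decision. ''Feasible'' means the constraint set of the optimization problem is nonempty. *)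

(* Defs.v *)
From HB Require Import structures.
From mathcomp Require Import all_boot all_order all_algebra.
From mathcomp Require Import all_classical all_reals all_analysis.
Set Implicit Arguments. Unset Strict Implicit. Unset Printing Implicit Defensive.
Import Order.TTheory GRing.Theory Num.Theory.
Import numFieldNormedType.Exports.
Local Open Scope classical_set_scope.
Local Open Scope ring_scope.

Section Defs.
Variable R : realType.

Definition qf n (A : 'M[R]_n) (v : 'cV[R]_n) : R := (v^T *m A *m v) 0 0.

Definition posdefmx n (A : 'M[R]_n) : Prop :=
  A^T = A /\ forall v : 'cV[R]_n, v != 0 -> 0 < qf A v.

Definition ceil_div (c g : nat) : nat := ((c + g.-1) %/ g)%N.

Fixpoint fiter np mp (fp : 'cV[R]_np -> 'cV[R]_mp -> 'cV[R]_np)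
  (i : nat) (xp : 'cV[R]_np) (uc : 'cV[R]_mp) : 'cV[R]_np :=
  match i with
  | 0 => xp
  | i'.+1 => fp (fiter fp i' xp uc) uc
  end.

(* overall state x = (x_p, u_s, beta) and input u = (u_c, gamma) *)
Definition state np mp := ('cV[R]_np * 'cV[R]_mp * int)%type.
Definition input mp := ('cV[R]_mp * bool)%type.

Definition xp_of np mp (x : state np mp) := x.1.1.
Definition us_of np mp (x : state np mp) := x.1.2.
Definition beta_of np mp (x : state np mp) := x.2.

Definition applied mp (uc us : 'cV[R]_mp) (gam : bool) : 'cV[R]_mp :=
  (gam%:R : R) *: uc + (1 - (gam%:R : R)) *: us.

Definition fsys np mp (fp : 'cV[R]_np -> 'cV[R]_mp -> 'cV[R]_np)
  (g c b : nat) (x : state np mp) (u : input mp) : state np mp :=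
  let ua := applied u.1 (us_of x) u.2 in
  (fp (xp_of x) ua, ua,
   Order.min (beta_of x + g%:Z - (u.2 : nat)%:Z * c%:Z) b%:Z).

Definition ell np mp (Q : 'M[R]_np) (Rm : 'M[R]_mp)
  (x : state np mp) (u : input mp) : R :=
  qf Q (xp_of x) + (u.2%:R : R) * qf Rm u.1
  + (1 - (u.2%:R : R)) * qf Rm (us_of x).

Definition inX np mp (Xp : set 'cV[R]_np) (Up : set 'cV[R]_mp) (b : nat)
  (x : state np mp) : Prop :=
  Xp (xp_of x) /\ Up (us_of x) /\ (0 <= beta_of x)%R /\ (beta_of x <= b%:Z)%R.

Definition inU mp (Up : set 'cV[R]_mp) (u : input mp) : Prop := Up u.1.

Definition inXf np mp (Xfp : set 'cV[R]_np) (Up : set 'cV[R]_mp)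
  (g c b : nat) (x : state np mp) : Prop :=
  (xp_of x = 0 /\ us_of x = 0 /\ (0 <= beta_of x)%R
      /\ (beta_of x <= c%:Z - g%:Z - 1)%R)
  \/ (Xfp (xp_of x) /\ Up (us_of x) /\ (c%:Z - g%:Z <= beta_of x)%R
      /\ (beta_of x <= b%:Z)%R).

Definition Vf np mp (Vfp : 'cV[R]_np -> R) (sigma : R) (b : nat)
  (x : state np mp) : R :=
  Vfp (xp_of x) + sigma * ((b%:R : R) ^+ 2 - ((beta_of x)%:~R : R) ^+ 2).

Fixpoint pred_traj np mp (fp : 'cV[R]_np -> 'cV[R]_mp -> 'cV[R]_np)
  (g c b : nat) (x0 : state np mp) (useq : nat -> input mp) (i : nat)
  : state np mp :=
  match i with
  | 0 => x0
  | i'.+1 => fsys fp g c b (pred_traj fp g c b x0 useq i') (useq i')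
  end.

Definition P_admissible np mp (fp : 'cV[R]_np -> 'cV[R]_mp -> 'cV[R]_np)
  (Xp : set 'cV[R]_np) (Up : set 'cV[R]_mp) (Xfp : set 'cV[R]_np)
  (g c b N : nat) (x0 : state np mp) (useq : nat -> input mp) : Prop :=
  (forall i, (i < N)%N ->
     inX Xp Up b (pred_traj fp g c b x0 useq i) /\ inU Up (useq i))
  /\ inXf Xfp Up g c b (pred_traj fp g c b x0 useq N).

Definition P_feasible np mp (fp : 'cV[R]_np -> 'cV[R]_mp -> 'cV[R]_np)
  (Xp : set 'cV[R]_np) (Up : set 'cV[R]_mp) (Xfp : set 'cV[R]_np)
  (g c b N : nat) (x0 : state np mp) : Prop :=
  exists useq, P_admissible fp Xp Up Xfp g c b N x0 useq.

Definition P_cost np mp (fp : 'cV[R]_np -> 'cV[R]_mp -> 'cV[R]_np)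
  (Q : 'M[R]_np) (Rm : 'M[R]_mp) (Vfp : 'cV[R]_np -> R) (sigma : R)
  (g c b N : nat) (x0 : state np mp) (useq : nat -> input mp) : R :=
  \sum_(i < N) ell Q Rm (pred_traj fp g c b x0 useq i) (useq i)
  + Vf Vfp sigma b (pred_traj fp g c b x0 useq N).

Definition P_optimal np mp (fp : 'cV[R]_np -> 'cV[R]_mp -> 'cV[R]_np)
  (Xp : set 'cV[R]_np) (Up : set 'cV[R]_mp) (Xfp : set 'cV[R]_np)
  (Q : 'M[R]_np) (Rm : 'M[R]_mp) (Vfp : 'cV[R]_np -> R) (sigma : R)
  (g c b N : nat) (x0 : state np mp) (useq : nat -> input mp) : Prop :=
  P_admissible fp Xp Up Xfp g c b N x0 useq /\
  forall v, P_admissible fp Xp Up Xfp g c b N x0 v ->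
    P_cost fp Q Rm Vfp sigma g c b N x0 useq
      <= P_cost fp Q Rm Vfp sigma g c b N x0 v.

Definition dist_interval (lo hi y : R) : R :=
  Num.max 0 (Num.max (lo - y) (y - hi)).

End Defs.

(* Main.v *)
Require Import Defs.
From HB Require Import structures.
From mathcomp Require Import all_boot all_order all_algebra.
From mathcomp Require Import all_classical all_reals all_analysis.
From mathcomp Require Import ring lra zify.
Set Implicit Arguments. Unset Strict Implicit. Unset Printing Implicit Defensive.
Import Order.TTheory GRing.Theory Num.Theory.
Import numFieldNormedType.Exports.
Local Open Scope classical_set_scope.
Local Open Scope ring_scope.
Section PD.
Variable R : realType.

Lemma qf0 n (A : 'M[R]_n) : qf A 0 = 0.
Proof. by rewrite /qf trmx0 mul0mx mul0mx mxE. Qed.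

Lemma qf_ge0 n (A : 'M[R]_n) v : posdefmx A -> 0 <= qf A v.
Proof.
move=> [_ H]; have [->|/H/ltW//] := eqVneq v 0; by rewrite qf0.
Qed.

Definition bf n (A : 'M[R]_n) (a b : 'cV[R]_n) := (a^T *m A *m b) 0 0.

Lemma bf_sym n (A : 'M[R]_n) a b : A^T = A -> bf A a b = bf A b a.
Proof.
move=> HA; rewrite /bf.
have tr : forall M : 'M[R]_1, M 0 0 = M^T 0 0 by move=> M; rewrite mxE.
by rewrite [LHS]tr trmx_mul trmx_mul trmxK HA mulmxA.
Qed.

Lemma e00D (M N : 'M[R]_1) : (M + N) 0 0 = M 0 0 + N 0 0.
Proof. by rewrite mxE. Qed.
Lemma e00Z (M : 'M[R]_1) (t : R) : (t *: M) 0 0 = t * M 0 0.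
Proof. by rewrite mxE. Qed.

Lemma qfD n (A : 'M[R]_n) a b (t : R) : A^T = A ->
  qf A (a + t *: b) = qf A a + 2 * t * bf A a b + t ^+ 2 * qf A b.
Proof.
move=> HA.
have E : qf A (a + t *: b) = qf A a + t * bf A a b + t * bf A b a + t^+2 * qf A b.
  rewrite /qf /bf.
  have -> : (a + t *: b)^T = a^T + t *: b^T by rewrite linearD linearZ.
  rewrite mulmxDl mulmxDl mulmxDr mulmxDr -!scalemxAl -!scalemxAr.
  rewrite !e00D !e00Z; ring.
rewrite E (bf_sym b a HA); ring.
Qed.

Lemma cs n (A : 'M[R]_n) a b : posdefmx A -> bf A a b ^+ 2 <= qf A a * qf A b.
Proof.
move=> [HA Hp].
have [->|bn0] := eqVneq b 0.
  by rewrite qf0 mulr0 /bf mulmx0 mxE expr0n.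
have qb : 0 < qf A b by apply: Hp.
have := qf_ge0 (a + (- bf A a b / qf A b) *: b) (conj HA Hp).
rewrite qfD // => H.
have : 0 <= qf A a * qf A b - bf A a b ^+ 2.
  have -> : qf A a * qf A b - bf A a b ^+ 2 =
    qf A b * (qf A a + 2 * (- bf A a b / qf A b) * bf A a b +
       (- bf A a b / qf A b) ^+ 2 * qf A b).
    field; exact: lt0r_neq0.
  by apply: mulr_ge0 => //; apply: ltW.
lra.
Qed.

Lemma bf_delta n (A : 'M[R]_n) j v : bf A (delta_mx j 0) v = (A *m v) j 0.
Proof. by rewrite /bf trmx_delta -mulmxA -rowE mxE. Qed.

Lemma qf_delta n (A : 'M[R]_n) j : qf A (delta_mx j 0) = A j j.
Proof. by rewrite -[qf _ _]/(bf _ _ _) bf_delta -colE mxE. Qed.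

Lemma posdef_unit n (A : 'M[R]_n) : posdefmx A -> A \in unitmx.
Proof.
move=> [HA Hp]; rewrite unitmxE unitfE; apply/negP => /det0P [v vn0 vA].
have := Hp (v^T); rewrite trmx_eq0 => /(_ vn0).
by rewrite /qf trmxK vA mul0mx mxE ltxx.
Qed.

Lemma posdef_bound n (A : 'M[R]_n) : posdefmx A ->
  forall eps : R, 0 < eps -> exists2 del : R, 0 < del &
    forall v, qf A v < del -> `|v| < eps.
Proof.
move=> PA eps eps0.
have Ajj : forall j, 0 <= A j j by move=> j; rewrite -qf_delta; apply: qf_ge0.
set P := invmx A.
set S := \sum_i \sum_j `|P i j| + 1.
set D := \sum_j A j j + 1.
have S0 : 0 < S by rewrite /S ltr_pwDr // sumr_ge0 // => i _; apply: sumr_ge0.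
have D0 : 0 < D by rewrite /D ltr_pwDr // sumr_ge0.
set eta := eps / S.
have eta0 : 0 < eta by apply: divr_gt0.
exists (eta ^+ 2 / D); first by apply: divr_gt0 => //; apply: exprn_gt0.
move=> v qv.
have wb : forall j, `|(A *m v) j 0| < eta.
  move=> j.
  suff : ((A *m v) j 0)^+2 < eta^+2.
    move: ((A *m v) j 0) => w H.
    have : `|w|^+2 < eta^+2 by rewrite real_normK ?num_real.
    by rewrite ltr_pXn2r // ?nnegrE ?normr_ge0 ?ltW.
  apply: (le_lt_trans (_ : _ <= A j j * qf A v)).
    by rewrite -bf_delta -qf_delta; apply: cs.
  apply: (le_lt_trans (_ : _ <= D * qf A v)).
    apply: ler_wpM2r; first exact: qf_ge0.
    rewrite /D (bigD1 j) //= -addrA lerDl addr_ge0 // sumr_ge0 // => k _.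
  by rewrite -ltr_pdivlMl // mulrC.
have vE : v = P *m (A *m v) by rewrite /P mulKmx //; apply: posdef_unit.
have vb : forall i, `|v i 0| < eps.
  move=> i; rewrite vE mxE.
  apply: (le_lt_trans (ler_norm_sum _ _ _)).
  apply: (le_lt_trans (_ : _ <= \sum_j `|P i j| * eta)).
    apply: ler_sum => j _; rewrite normrM ler_wpM2l //; exact: ltW.
  rewrite -mulr_suml.
  have -> : eps = S * eta by rewrite /eta mulrC divfK // lt0r_neq0.
  rewrite ltr_pM2r // /S [in X in _ < X](bigD1 i) //= -addrA ltr_pwDr // ltr_pwDr //.
  by rewrite sumr_ge0 // => k _; apply: sumr_ge0.
rewrite [X in X < _]/Num.norm /= mx_normrE.
apply: bigmax_lt => // -[i k] _ /=.
by rewrite (ord1 k); apply: vb.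
Qed.

Lemma posdef_cvg n (A : 'M[R]_n) (v : nat -> 'cV[R]_n) (e : nat -> R) :
  posdefmx A -> (forall k, qf A (v k) <= e k) -> e @ \oo --> 0 ->
  v @ \oo --> (0 : 'cV[R]_n).
Proof.
move=> PA ve /cvgr0Pnorm_lt ec; apply/cvgr0Pnorm_lt => eps eps0.
have [del del0 Hd] := posdef_bound PA eps0.
near=> k; apply: Hd; apply: (le_lt_trans (ve k)).
apply: (le_lt_trans (ler_norm _)); near: k; exact: ec.
Unshelve. all: by end_near. Qed.

Lemma series_bnd (a : nat -> R) (B : R) : (forall n, 0 <= a n) ->
  (forall n, \sum_(0 <= k < n) a k <= B) -> a @ \oo --> 0.
Proof.
move=> a0 aB; apply: cvg_series_cvg_0; apply: nondecreasing_is_cvgn.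
  rewrite /series /=.
  have := @nondecreasing_series R a xpredT 0%N.
  by apply => k _ _.
by exists B => _ [k _ <-]; apply: aB.
Qed.
End PD.

Section Sys.
Variables (R : realType) (np mp : nat) (fp : 'cV[R]_np -> 'cV[R]_mp -> 'cV[R]_np)
  (Xp : set 'cV[R]_np) (Up : set 'cV[R]_mp)
  (Q : 'M[R]_np) (Rm : 'M[R]_mp) (g c b : nat)
  (Xfp : set 'cV[R]_np) (kp : 'cV[R]_np -> 'cV[R]_mp)
  (Vfp : 'cV[R]_np -> R) (sigma : R) (q : nat).
Hypotheses (fp0 : fp 0 0 = 0) (Xp0 : Xp 0) (Up0 : Up 0)
  (PQ : posdefmx Q) (PR : posdefmx Rm)
  (g1 : (1 <= g)%N) (gc : (g <= c)%N) (cb : (c <= b)%N)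
  (XfXp : Xfp `<=` Xp) (Xf0 : Xfp 0) (kpU : forall xp, Xfp xp -> Up (kp xp))
  (q1 : (1 <= q)%N) (qgc : (c < q * g)%N)
  (A1 : forall xp, Xfp xp ->
     (forall i, (1 <= i)%N -> (i <= q.-1)%N -> Xp (fiter fp i xp (kp xp)))
     /\ Xfp (fiter fp q xp (kp xp)))
  (Vf0 : Vfp 0 = 0) (Vfpos : forall xp, Xfp xp -> xp != 0 -> 0 < Vfp xp)
  (A2 : forall xp, Xfp xp ->
     Vfp (fiter fp q xp (kp xp)) - Vfp xp <=
       - (q%:R * qf Rm (kp xp))
       - \sum_(i < q) qf Q (fiter fp i xp (kp xp)))
  (sig0 : 0 < sigma).

Local Notation traj := (pred_traj fp g c b).
Local Notation st := (state R np mp).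
Local Notation ellf := (ell Q Rm).
Local Notation Vff := (Vf Vfp sigma b).

Lemma traj_ext (x0 : st) v w i : (forall k, (k < i)%N -> v k = w k) ->
  traj x0 v i = traj x0 w i.
Proof.
elim: i => //= i IH H; rewrite IH ?H // => k Hk; apply: H; lia.
Qed.

Lemma traj_shift (x0 : st) v n i :
  traj x0 v (n + i) = traj (traj x0 v n) (fun k => v (n + k)%N) i.
Proof. elim: i => [|i IH]; first by rewrite addn0. by rewrite addnS /= IH. Qed.

Lemma applied_T (uc us : 'cV[R]_mp) : applied uc us true = uc.
Proof. by rewrite /applied /= scale1r subrr scale0r addr0. Qed.
Lemma applied_F (uc us : 'cV[R]_mp) : applied uc us false = us.
Proof. by rewrite /applied /= scale0r add0r subr0 scale1r. Qed.

Lemma ell_T (x : st) uc : ellf x (uc, true) = qf Q (xp_of x) + qf Rm uc.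
Proof. by rewrite /ell /= mul1r subrr mul0r addr0. Qed.
Lemma ell_F (x : st) uc : ellf x (uc, false) = qf Q (xp_of x) + qf Rm (us_of x).
Proof. by rewrite /ell /= mul0r addr0 subr0 mul1r. Qed.

Lemma ell_ge0 (x : st) u : 0 <= ellf x u.
Proof.
by case: u => uc []; rewrite ?ell_T ?ell_F; apply: addr_ge0; apply: qf_ge0.
Qed.

Lemma ell_geQ (x : st) u : qf Q (xp_of x) <= ellf x u.
Proof.
by case: u => uc []; rewrite ?ell_T ?ell_F lerDl; apply: qf_ge0.
Qed.

Lemma ell_geR (x : st) u : qf Rm (us_of (fsys fp g c b x u)) <= ellf x u.
Proof.
case: u => uc []; rewrite ?ell_T ?ell_F /fsys /us_of /= ?applied_T ?applied_F lerDr;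
  by apply: qf_ge0.
Qed.

Lemma natzR (n : nat) : ((n%:Z)%:~R : R) = n%:R.
Proof. by []. Qed.

Lemma Vf_ge0 (z : st) : inXf Xfp Up g c b z -> 0 <= Vff z.
Proof.
have H : forall be : int, (0 <= be)%R -> (be <= b%:Z)%R ->
    0 <= sigma * ((b%:R : R) ^+ 2 - (be%:~R) ^+ 2).
  move=> be h0 h1; apply: mulr_ge0; first exact: ltW.
  rewrite subr_ge0 -natzR; apply: lerXn2r; rewrite ?nnegrE ?ler0z ?ler_int //.
case: z => [[xp us] be]; rewrite /inXf /xp_of /us_of /beta_of /=.
case=> [[-> [_ [h0 h1]]] | [hx [_ [h0 h1]]]].
  rewrite /Vf /= Vf0 add0r; apply: H => //; lia.
rewrite /Vf /=; apply: addr_ge0; last by apply: H => //; lia.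
have [->|xn0] := eqVneq xp 0; first by rewrite Vf0.
exact/ltW/Vfpos.
Qed.


Lemma beta_part (be be' : int) : (0 <= be)%R -> (be <= be')%R ->
  ((be < b%:Z)%R -> (be + 1 <= be')%R) ->
  sigma * ((b%:R : R) ^+ 2 - (be'%:~R) ^+ 2)
    + (if (be < b%:Z)%R then sigma else 0)
  <= sigma * ((b%:R : R) ^+ 2 - (be%:~R) ^+ 2).
Proof.
move=> h0 h1 h2.
have X0 : (0 : R) <= be%:~R by rewrite ler0z.
have XY : (be%:~R : R) <= be'%:~R by rewrite ler_int.
case: ifP => hb.
  have h : ((be + 1)%:~R : R) <= be'%:~R by rewrite ler_int; apply: h2.
  rewrite intrD /= in h.
  have : (be%:~R : R) ^+ 2 + 1 <= (be'%:~R) ^+ 2 by nra.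
  move=> H; rewrite -[X in _ + X <= _]mulr1 -mulrDr ler_pM2l //; lra.
rewrite addr0 ler_pM2l //; nra.
Qed.

Lemma block (z : st) : inXf Xfp Up g c b z -> exists w : nat -> input R mp,
  (forall i, (i < q)%N -> inX Xp Up b (traj z w i) /\ inU Up (w i)) /\
  inXf Xfp Up g c b (traj z w q) /\
  \sum_(i < q) ellf (traj z w i) (w i) + Vff (traj z w q)
     + (if (beta_of z < b%:Z)%R then sigma else 0) <= Vff z.
Proof.
case: z => [[xp us] be]; rewrite /inXf /xp_of /us_of /beta_of /=.
case=> [[-> [-> [h0 h1]]] | [hx [hu [h0 h1]]]].
  pose w := fun i : nat => ((0 : 'cV[R]_mp), false).
  have T : forall i, traj (0, 0, be) w i = (0, 0, Order.min (be + (i * g)%:Z) b%:Z).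
    elim=> [|i IH]; first by rewrite /= mul0n addr0; congr (_, _, _); lia.
    rewrite [traj _ w i.+1]/= IH /fsys /= applied_F /beta_of /us_of /xp_of /= fp0.
    congr (_, _, _); rewrite mulSn; move: (i * g)%N => t; lia.
  exists w; split; last split.
  - move=> i iq; rewrite T /inX /inU /xp_of /us_of /beta_of /=; do !split => //; lia.
  - rewrite T /xp_of /us_of /beta_of /=; move: (q * g)%N qgc => t tq.
    have [H|H] := lerP (be + t%:Z) (c%:Z - g%:Z - 1).
      by left; do !split => //; lia.
    by right; do !split => //; lia.
  - have -> : \sum_(i < q) ellf (traj (0, 0, be) w i) (w i) = 0.
      rewrite big1 // => i _; rewrite T ell_F /xp_of /us_of /= !qf0 addr0 //.
    rewrite add0r T /Vf /xp_of /beta_of /=.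
    rewrite -addrA lerD2l; apply: beta_part => //; move: (q * g)%N qgc => t tq; lia.
pose w := fun i : nat => (kp xp, i == 0%N).
have T : forall i, traj (xp, us, be) w i.+1 =
    (fiter fp i.+1 xp (kp xp), kp xp, Order.min (be + (i.+1 * g)%:Z - c%:Z) b%:Z).
  elim=> [|i IH].
    rewrite /= /fsys /= applied_T /us_of /beta_of /xp_of /=.
    congr (_, _, _); lia.
  have -> : traj (xp, us, be) w i.+2 = fsys fp g c b (traj (xp, us, be) w i.+1) (w i.+1) by [].
  rewrite IH /fsys /= applied_F /beta_of /us_of /xp_of /=.
  congr (_, _, _); rewrite [(i.+2 * g)%N]mulSn; move: (i.+1 * g)%N => t; lia.
have Xfx := A1 hx.
exists w; split; last split.
- case=> [|i] iq.
    rewrite /inX /inU /xp_of /us_of /beta_of /=; do !split => //.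
    + exact: XfXp. + lia. + exact: kpU.
  rewrite T /inX /inU /xp_of /us_of /beta_of /=; do !split => //.
  + apply: (Xfx.1 i.+1); lia.
  + exact: kpU.
  + have : (1 * g <= i.+1 * g)%N by rewrite leq_mul2r; apply/orP; right.
    move: (i.+1 * g)%N => t; lia.
  + lia.
  + exact: kpU.
- case: q q1 qgc Xfx A2 T => // q' _ qgc' Xfx A2' T.
  rewrite T /xp_of /us_of /beta_of /=; right; do !split => //.
  + exact: Xfx.2.
  + exact: kpU.
  + move: (q'.+1 * g)%N qgc' => t tq; lia.
  + lia.
- have -> : \sum_(i < q) ellf (traj (xp, us, be) w i) (w i) =
     \sum_(i < q) (qf Q (fiter fp i xp (kp xp)) + qf Rm (kp xp)).
    apply: eq_bigr => -[[|i] iq] _.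
      by rewrite /= ell_T.
    by rewrite (T i) ell_F.
  rewrite big_split /= sumr_const card_ord -mulr_natl.
  case: q q1 qgc Xfx A2 T => // q' _ qgc' Xfx A2' T.
  rewrite T /Vf /xp_of /beta_of /=.
  have H1 := A2' _ hx.
  have H2 : sigma * ((b%:R : R) ^+ 2 - ((Order.min (be + (q'.+1 * g)%:Z - c%:Z) b%:Z)%:~R) ^+ 2)
    + (if (be < b%:Z)%R then sigma else 0) <= sigma * ((b%:R : R) ^+ 2 - (be%:~R) ^+ 2).
    apply: beta_part; first lia.
      by move: (q'.+1 * g)%N qgc' => t tq; lia.
    by move: (q'.+1 * g)%N qgc' => t tq; lia.
  lra.
Qed.


Lemma blocks n (z : st) : inXf Xfp Up g c b z -> exists W : nat -> input R mp,
  (forall i, (i < n * q)%N -> inX Xp Up b (traj z W i) /\ inU Up (W i)) /\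
  inXf Xfp Up g c b (traj z W (n * q)) /\
  \sum_(i < n * q) ellf (traj z W i) (W i) + Vff (traj z W (n * q))
     + (if (0 < n)%N && (beta_of z < b%:Z)%R then sigma else 0) <= Vff z.
Proof.
elim: n z => [|n IH] z hz.
  exists (fun _ => ((0 : 'cV[R]_mp), false)); split => //; split => //.
  by rewrite mul0n big_ord0 add0r addr0 /=.
have [w [hw1 [hw2 hw3]]] := block hz.
set z1 := traj z w q in hw2 hw3.
have [W' [h1 [h2 h3]]] := IH z1 hw2.
pose W := fun i => if (i < q)%N then w i else W' (i - q)%N.
have E1 : forall i, (i <= q)%N -> traj z W i = traj z w i.
  by move=> i hi; apply: traj_ext => k hk; rewrite /W ifT //; lia.
have E2 : forall i, traj z W (q + i) = traj z1 W' i.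
  move=> i; rewrite traj_shift E1 //; apply: traj_ext => k _.
  by rewrite /W ifF ?addKn //; lia.
exists W; rewrite mulSn; split; last split.
- move=> i hi; case: (ltnP i q) => iq.
    by rewrite (E1 i (ltnW iq)) /W iq; apply: hw1.
  move: hi; have [k ->] : exists k, i = (q + k)%N by exists (i - q)%N; lia.
  move=> hi; rewrite E2 /W ifF ?addKn; last by lia.
  by apply: h1; rewrite ltn_add2l in hi.
- by rewrite E2.
- rewrite big_split_ord /=.
  have -> : \sum_(i < q) ellf (traj z W (lshift (n * q) i)) (W (lshift (n * q) i))
      = \sum_(i < q) ellf (traj z w i) (w i).
    apply: eq_bigr => i _; rewrite (E1 i (ltnW (ltn_ord i))).
    by rewrite /W /= ltn_ord.
  have -> : \sum_(i < n * q) ellf (traj z W (rshift q i)) (W (rshift q i))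
      = \sum_(i < n * q) ellf (traj z1 W' i) (W' i).
    apply: eq_bigr => i _; rewrite (E2 i).
    by rewrite /W /= ifF ?addKn //; lia.
  rewrite E2.
  have ind0 : 0 <= (if (0 < n)%N && (beta_of z1 < b%:Z)%R then sigma else 0).
    by case: ifP => _ //; apply: ltW.
  move: hw3 h3 ind0; rewrite /=; lra.
Qed.

Lemma sum_split' (F : nat -> R) m n K : K = (m + n)%N ->
  \sum_(i < K) F i = \sum_(i < m) F i + \sum_(i < n) F (m + i)%N.
Proof. by move=> ->; rewrite big_split_ord. Qed.

Variables (r N : nat) (x : nat -> st) (u : nat -> input R mp).
Hypotheses (r1 : (1 <= r)%N) (MN : (r * q <= N)%N)
  (dyn : forall k, x k.+1 = fsys fp g c b (x k) (u k)).
Local Notation M := (r * q)%N.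

Lemma xM j (ustar : nat -> input R mp) :
  (forall i, (i < M)%N -> u (j * M + i)%N = ustar i) ->
  forall i, (i <= M)%N -> x (j * M + i)%N = traj (x (j * M)%N) ustar i.
Proof.
move=> hu; elim=> [|i IH] hi; first by rewrite addn0.
by rewrite addnS dyn (IH (ltnW hi)) hu.
Qed.

Lemma step j ustar :
  P_optimal fp Xp Up Xfp Q Rm Vfp sigma g c b N (x (j * M)%N) ustar ->
  (forall i, (i < M)%N -> u (j * M + i)%N = ustar i) ->
  exists v, P_admissible fp Xp Up Xfp g c b N (x (j.+1 * M)%N) v /\
   P_cost fp Q Rm Vfp sigma g c b N (x (j.+1 * M)%N) v
   + \sum_(i < M) ellf (x (j * M + i)%N) (u (j * M + i)%N)
   + (if (beta_of (traj (x (j * M)%N) ustar N) < b%:Z)%R then sigma else 0)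
   <= P_cost fp Q Rm Vfp sigma g c b N (x (j * M)%N) ustar.
Proof.
move=> [[adm term] _] hu.
set x0 := x (j * M)%N in adm term hu *.
set z := traj x0 ustar N in term *.
have [W [hW1 [hW2 hW3]]] := blocks r term.
pose v := fun i => if (i < N - M)%N then ustar (M + i)%N else W (i - (N - M))%N.
have x'E : x (j.+1 * M)%N = traj x0 ustar M by rewrite mulSn addnC (xM hu (leqnn _)).
have E1 : forall i, (i <= N - M)%N -> traj (x (j.+1 * M)%N) v i = traj x0 ustar (M + i).
  move=> i hi; rewrite traj_shift -x'E; apply: traj_ext => k hk.
  by rewrite /v ifT //; lia.
have E2 : forall i, traj (x (j.+1 * M)%N) v (N - M + i) = traj z W i.
  move=> i; rewrite traj_shift E1 // subnKC //; apply: traj_ext => k _.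
  by rewrite /v ifF ?addKn //; lia.
exists v; split; first split.
- move=> i hi; case: (ltnP i (N - M)) => iN.
    rewrite (E1 i (ltnW iN)) /v iN; apply: adm; lia.
  move: hi; have [k ->] : exists k, i = (N - M + k)%N by exists (i - (N - M))%N; lia.
  move=> hi; rewrite E2 /v ifF ?addKn; last by lia.
  apply: hW1; move: hi MN; move: (r * q)%N => m; lia.
- by rewrite -[in traj _ _ N](subnK MN) E2.
- rewrite /P_cost (sum_split' (fun i => ellf (traj (x (j.+1 * M)%N) v i) (v i)) (esym (subnK MN))).
  rewrite (sum_split' (fun i => ellf (traj x0 ustar i) (ustar i)) (esym (subnKC MN))).
  have -> : \sum_(i < N - M) ellf (traj (x (j.+1 * M)%N) v i) (v i) =
            \sum_(i < N - M) ellf (traj x0 ustar (M + i)) (ustar (M + i)%N).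
    by apply: eq_bigr => i _; rewrite (E1 i (ltnW (ltn_ord i))) /v ltn_ord.
  have -> : \sum_(i < M) ellf (traj (x (j.+1 * M)%N) v (N - M + i))
                               (v (N - M + i)%N) =
            \sum_(i < M) ellf (traj z W i) (W i).
    by apply: eq_bigr => i _; rewrite E2 /v ifF ?addKn //; lia.
  have -> : \sum_(i < M) ellf (x (j * M + i)%N) (u (j * M + i)%N) =
            \sum_(i < M) ellf (traj x0 ustar i) (ustar i).
    by apply: eq_bigr => i _; rewrite (xM hu (ltnW (ltn_ord i))) hu.
  have -> : traj (x (j.+1 * M)%N) v N = traj z W M.
    by rewrite -[in traj _ _ N](subnK MN) E2.
  move: hW3; have -> : (0 < r)%N by []. rewrite /=. lra.
Qed.


Lemma beta_growth (x0 : st) (v : nat -> input R mp) i n : (i <= n)%N ->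
  (beta_of (traj x0 v n) <= beta_of (traj x0 v i) + ((n - i) * g)%:Z)%R.
Proof.
elim: n => [|n IH] hi.
  have -> : i = 0%N by lia.
  by rewrite /= subnn mul0n addr0.
case: (ltnP n i) => hni.
  have -> : i = n.+1 by lia.
  by rewrite subnn mul0n addr0.
have := IH hni.
rewrite subSn // mulSn /= /fsys /beta_of /=.
move: ((n - i) * g)%N => t; move: (v n).2 => bb.
move: (traj x0 v n).2 (traj x0 v i).2 => b1 b2; case: bb => /=; lia.
Qed.

Lemma dist0 (lo hi y : R) : lo <= y -> y <= hi -> dist_interval lo hi y = 0.
Proof.
move=> hl hh; rewrite /dist_interval; apply/max_idPl.
by rewrite ge_max !subr_le0 hl hh.
Qed.

Hypotheses
  (Hopt : forall j, P_feasible fp Xp Up Xfp g c b N (x (j * M)%N) ->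
     exists ustar,
       P_optimal fp Xp Up Xfp Q Rm Vfp sigma g c b N (x (j * M)%N) ustar /\
       forall i, (i < M)%N -> u (j * M + i)%N = ustar i)
  (Hf0 : P_feasible fp Xp Up Xfp g c b N (x 0%N)).

Lemma feas j : P_feasible fp Xp Up Xfp g c b N (x (j * M)%N).
Proof.
elim: j => [|j IH]; first by rewrite mul0n.
have [us [Hop Hu]] := Hopt IH.
have [v [adm _]] := step Hop Hu.
by exists v.
Qed.

Lemma main_sec :
  (forall j, P_feasible fp Xp Up Xfp g c b N (x (j * M)%N))
  /\ (fun k => xp_of (x k)) @ \oo --> (0 : 'cV[R]_np)
  /\ (fun k => us_of (x k)) @ \oo --> (0 : 'cV[R]_mp)
  /\ (fun k => dist_interval (Num.max 0 (b%:R - N%:R * g%:R)) b%:R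
                 ((beta_of (x k))%:~R)) @ \oo --> (0 : R)
  /\ (fun j => dist_interval (Num.max 0 (b%:R - (N - M)%:R * g%:R)) b%:R
                 ((beta_of (x (j * M)%N))%:~R)) @ \oo --> (0 : R).
Proof.
have M0 : (0 < M)%N by rewrite muln_gt0; apply/andP; split.
have [us Hus] := choice (fun j => Hopt (feas j)).
pose J j := P_cost fp Q Rm Vfp sigma g c b N (x (j * M)%N) (us j).
pose e k := ellf (x k) (u k).
pose bN j := beta_of (traj (x (j * M)%N) (us j) N).
pose ind j := if (bN j < b%:Z)%R then sigma else 0.
pose S j := \sum_(i < M) e (j * M + i)%N.
have dec : forall j, J j.+1 + S j + ind j <= J j.
  move=> j; have [v [adm H]] := step (Hus j).1 (Hus j).2.
  have := (Hus j.+1).1.2 v adm.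
  rewrite /J /S /ind /bN /e; lra.
have J0 : forall j, 0 <= J j.
  move=> j; rewrite /J /P_cost; apply: addr_ge0.
    by apply: sumr_ge0 => i _; apply: ell_ge0.
  exact/Vf_ge0/((Hus j).1.1.2).
have S0 : forall j, 0 <= S j by move=> j; apply: sumr_ge0 => i _; apply: ell_ge0.
have ind0 : forall j, 0 <= ind j by move=> j; rewrite /ind; case: ifP => _ //; apply: ltW.
have tele : forall n, \sum_(0 <= j < n) (S j + ind j) <= J 0%N - J n.
  elim=> [|n IH]; first by rewrite big_nil subrr.
  rewrite big_nat_recr //=; have := dec n; lra.
have bnd : forall n, \sum_(0 <= j < n) (S j + ind j) <= J 0%N.
  by move=> n; apply: (le_trans (tele n)); rewrite lerBlDr lerDl.
have ind_cvg : ind @ \oo --> 0.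
  apply: (series_bnd ind0 (B := J 0%N)) => n.
  apply: le_trans (bnd n); apply: ler_sum => j _; rewrite lerDr.
  exact: S0.
have eS : forall n, \sum_(0 <= k < n * M) e k = \sum_(0 <= j < n) S j.
  elim=> [|n IH]; first by rewrite mul0n !big_nil.
  rewrite mulSnr (big_cat_nat (leq0n _) (leq_addr _ _)) IH big_nat_recr //=.
  congr (_ + _); rewrite /S -{1}[(n * M)%N]add0n big_addn addKn big_mkord.
  by apply: eq_bigr => i _; rewrite addnC.
have e0 : forall k, 0 <= e k by move=> k; apply: ell_ge0.
have e_cvg : e @ \oo --> 0.
  apply: (series_bnd e0 (B := J 0%N)) => n.
  have hn : (n <= n * M)%N by rewrite leq_pmulr.
  apply: (le_trans (_ : _ <= \sum_(0 <= k < n * M) e k)).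
    rewrite (big_cat_nat (leq0n _) hn) /= lerDl.
    by apply: sumr_ge0 => k _.
  rewrite eS; apply: le_trans (bnd n); apply: ler_sum => j _; rewrite lerDl.
  exact: ind0.
split; first exact: feas.
split.
  apply: (posdef_cvg (e := e) PQ) => // k; exact: ell_geQ.
split.
  rewrite -cvg_shiftS /=.
  apply: (posdef_cvg (e := e) PR) => // k; rewrite dyn; exact: ell_geR.
have [j0 Hj0] : exists j0, forall j, (j0 <= j)%N -> (b%:Z <= bN j)%R.
  move/cvgr0Pnorm_lt: ind_cvg => /(_ sigma sig0) [j0 _ H].
  exists j0 => j hj; have := H j hj; rewrite /= /ind.
  case: ifP => [_|/negbT]; rewrite ?(gtr0_norm sig0) ?normr0; first by rewrite ltxx.
  by rewrite -leNgt => h _.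
have betaX : forall j i, (i < N)%N ->
    (0 <= beta_of (traj (x (j * M)%N) (us j) i))%R /\
    (beta_of (traj (x (j * M)%N) (us j) i) <= b%:Z)%R.
  move=> jj ii hi; have [_ [_ [h1 h2]]] := ((Hus jj).1.1.1 ii hi).1; by split.
split.
  apply: cvg_near_cst; exists (j0 * M)%N => // k /= hk.
  set j := (k %/ M)%N; set i := (k %% M)%N.
  have kE : k = (j * M + i)%N by rewrite /j /i -divn_eq.
  have hj : (j0 <= j)%N.
    by rewrite /j; have := leq_div2r M hk; rewrite mulnK.
  have hiM : (i < M)%N by rewrite /i ltn_pmod.
  have hiN : (i < N)%N by apply: leq_trans hiM MN.
  rewrite kE (xM (Hus j).2 (ltnW hiM)).
  have [h1 h2] := betaX j i hiN.
  have h3 := beta_growth (x (j * M)%N) (us j) (ltnW hiN).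
  have h4 := Hj0 j hj; rewrite /bN in h4.
  move: h1 h2 h3 h4; set be := beta_of _ => h1 h2 h3 h4.
  have h5 : ((b%:Z - (N * g)%:Z) <= be)%R.
    have : ((N - i) * g <= N * g)%N by rewrite leq_mul2r leq_subr orbT.
    move: h3 h4; move: ((N - i) * g)%N ((N * g)%N) => t1 t2; lia.
  apply: dist0; last by rewrite -natzR ler_int.
  rewrite ge_max ler0z h1 /= -natrM -!natzR -intrB ler_int //.
apply: cvg_near_cst; exists j0.+1 => // -[|j] //= hj.
have hj' : (j0 <= j)%N by [].
have hM : (M <= N)%N := MN.
have xE : x (j.+1 * M)%N = traj (x (j * M)%N) (us j) M.
  by rewrite mulSn addnC (xM (Hus j).2 (leqnn _)).
have [h1 h2] := betaX j.+1 0%N (leq_trans M0 MN).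
rewrite /= in h1 h2.
have h3 := beta_growth (x (j * M)%N) (us j) MN.
have h4 := Hj0 j hj'; rewrite /bN in h4.
rewrite xE in h1 h2 *.
move: h1 h2 h3 h4; set be := beta_of _ => h1 h2 h3 h4.
apply: dist0; last by rewrite -natzR ler_int.
rewrite ge_max ler0z h1 /= -natrM -!natzR -intrB ler_int //.
move: ((N - M) * g)%N h3 => t; lia.
Qed.

End Sys.

Theorem theorem1 (R : realType) (np mp : nat)
  (fp : 'cV[R]_np -> 'cV[R]_mp -> 'cV[R]_np)
  (Xp : set 'cV[R]_np) (Up : set 'cV[R]_mp)
  (Q : 'M[R]_np) (Rm : 'M[R]_mp) (g c b : nat)
  (Xfp : set 'cV[R]_np) (kp : 'cV[R]_np -> 'cV[R]_mp)
  (Vfp : 'cV[R]_np -> R) (sigma : R) (r N : nat)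
  (x : nat -> state R np mp) (u : nat -> input R mp) :
  fp 0 0 = 0 ->
  closed Xp -> Xp 0 -> closed Up -> Up 0 ->
  posdefmx Q -> posdefmx Rm ->
  (1 <= g)%N -> (g <= c)%N -> (c <= b)%N ->
  let q := ceil_div c g in
  (* (A1) *)
  closed Xfp -> Xfp `<=` Xp -> Xfp 0 ->
  (forall xp, Xfp xp -> Up (kp xp)) ->
  (forall xp, Xfp xp ->
     (forall i, (1 <= i)%N -> (i <= q.-1)%N -> Xp (fiter fp i xp (kp xp)))
     /\ Xfp (fiter fp q xp (kp xp))) ->
  (* (A2) *)
  {within Xfp, continuous Vfp} ->
  Vfp 0 = 0 -> (forall xp, Xfp xp -> xp != 0 -> 0 < Vfp xp) ->
  (forall xp, Xfp xp ->
     Vfp (fiter fp q xp (kp xp)) - Vfp xp <=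
       - (q%:R * qf Rm (kp xp))
       - \sum_(i < q) qf Q (fiter fp i xp (kp xp))) ->
  (* (A3) *)
  ~ (exists z : int, (c%:R / g%:R : R) = z%:~R) ->
  0 < sigma ->
  (1 <= r)%N ->
  let M := (r * q)%N in
  (M <= N)%N ->
  (* closed loop generated by the rollout scheme *)
  (forall k, x k.+1 = fsys fp g c b (x k) (u k)) ->
  (forall j, P_feasible fp Xp Up Xfp g c b N (x (j * M)%N) ->
     exists ustar,
       P_optimal fp Xp Up Xfp Q Rm Vfp sigma g c b N (x (j * M)%N) ustar /\
       forall i, (i < M)%N -> u (j * M + i)%N = ustar i) ->
  P_feasible fp Xp Up Xfp g c b N (x 0%N) ->
  (forall j, P_feasible fp Xp Up Xfp g c b N (x (j * M)%N))
  /\ (fun k => xp_of (x k)) @ \oo --> (0 : 'cV[R]_np)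
  /\ (fun k => us_of (x k)) @ \oo --> (0 : 'cV[R]_mp)
  /\ (fun k => dist_interval (Num.max 0 (b%:R - N%:R * g%:R)) b%:R
                 ((beta_of (x k))%:~R)) @ \oo --> (0 : R)
  /\ (fun j => dist_interval (Num.max 0 (b%:R - (N - M)%:R * g%:R)) b%:R
                 ((beta_of (x (j * M)%N))%:~R)) @ \oo --> (0 : R).
Proof.
move=> fp0 cXp Xp0 cUp Up0 PQ PR g1 gc cb q cXf XfXp Xf0 kpU A1 cVf Vf0 Vfpos A2
  A3 sig0 r1 M MN dyn Hopt Hf0.
have ndiv : ~~ (g %| c)%N.
  apply/negP => hd; apply: A3; exists ((c %/ g)%N%:Z).
  have -> : (((c %/ g)%N%:Z)%:~R : R) = (c %/ g)%N%:R by [].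
  rewrite -{1}(divnK hd) natrM mulfK // pnatr_eq0; lia.
have q1 : (1 <= q)%N by rewrite /q /ceil_div divn_gt0 //; lia.
have qgc : (c < q * g)%N.
  rewrite /q /ceil_div; move: ndiv; rewrite /dvdn => H2.
  have E := divn_eq c g. have L := ltn_pmod c g1.
  move: E L H2; set a := (c %/ g)%N; set s := (c %% g)%N => E L H2.
  have -> : (c + g.-1 = a.+1 * g + s.-1)%N.
    rewrite mulSn; move: (a * g)%N E => ag E. lia.
  rewrite divnMDl // divn_small; last by lia.
  rewrite addn0 mulSn; move: (a * g)%N E => ag E; lia.
exact: (main_sec fp0 Xp0 Up0 PQ PR g1 gc cb XfXp Xf0 kpU q1 qgc A1 Vf0 Vfpos A2
  sig0 r1 MN dyn Hopt Hf0).
Qed.
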